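(* Let $r,s\in\mathbb{N}$, $\alpha\in\mathbb{R}^r_{++}$, $p,p_u\in[1,\infty)$, $\rho_u>0$, and $\delta\in\mathbb{R}^r_{++}$. For every $x\in\mathbb{R}^s_+$ and every $u\in\mathbb{R}^{r\times s}_{++}$ with $\|u\|_{p_u}\le\rho_u$, $$\Big[\sum_{l=1}^r\delta_l^p\Big(\sum_{m=1}^s u_{lm}x_m\Big)^{p\alpha_l}\Big]^{1/p}\le\Psi^{\alpha}_{p,p_u}\big(\delta,\rho_u\|x\|_{p_u'}\big).$$ Moreover, if $(\delta,t)\le(\tilde\delta,\tilde t)$ componentwise (with $t,\tilde t>0$), then $\Psi^\alpha_{p,p_u}(\delta,t)\le\Psi^\alpha_{p,p_u}(\tilde\delta,\tilde t)\le\sum_{l=1}^r\tilde\delta_l\tilde t^{\alpha_l}$.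
   Context: $\mathbb{R}_{++}=(0,\infty)$; $\|u\|_{p_u}$ is the entrywise $\ell_{p_u}$ norm; $p_u'=p_u/(p_u-1)$ (with $p_u'=\infty$ if $p_u=1$). For $p,q\ge1$ and $\alpha\in\mathbb{R}^r_{++}$, define $\Psi^\alpha_{p,q}:\mathbb{R}^r_{++}\times\mathbb{R}_{++}\to\mathbb{R}_{++}$ by $$\Psi^{\alpha}_{p,q}(\delta,t)=\Big(\Big[\sum_{l\in J}(\delta_l t^{\alpha_l})^{\frac{pq}{q-\bar\alpha p}}\Big]^{1-\frac{\bar\alpha p}{q}}+\max_{j\in J^c}(\delta_j t^{\alpha_j})^p\Big)^{1/p},$$ where $J=\{l\in[r]:\alpha_l p<q\}$, $J^c=\{l\in[r]:\alpha_l p\ge q\}$, $\bar\alpha=\min_{l\in J}\alpha_l$, and an empty sum or empty maximum is taken to be $0$. *)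

(* Defs.v *)
From Stdlib Require Import Reals Lra.
Open Scope R_scope.

(* Real power for nonnegative bases: x^y for x > 0, and 0 for x <= 0
   (so 0^y = 0, the usual convention for y > 0). *)
Definition rpow (x y : R) : R :=
  if Rlt_dec 0 x then Rpower x y else 0.

Fixpoint fsum (n : nat) (f : nat -> R) : R :=
  match n with O => 0 | S k => fsum k f + f k end.

(* max of nonnegative values f 0, ..., f (n-1); empty max = 0. *)
Fixpoint fmax (n : nat) (f : nat -> R) : R :=
  match n with O => 0 | S k => Rmax (fmax k f) (f k) end.

Fixpoint fminP (n : nat) (P : nat -> bool) (a : nat -> R) : option R :=
  match n with
  | O => None
  | S k =>
      let m := fminP k P a in
      if P k then
        match m with None => Some (a k) | Some v => Some (Rmin v (a k)) end
      else m
  end.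

Definition inJ (alpha : nat -> R) (p q : R) (l : nat) : bool :=
  if Rlt_dec (alpha l * p) q then true else false.

(* alpha_bar = min_{l in J} alpha_l (value irrelevant when J is empty) *)
Definition alpha_bar (r : nat) (alpha : nat -> R) (p q : R) : R :=
  match fminP r (inJ alpha p q) alpha with Some v => v | None => 0 end.

Definition Psi (r : nat) (alpha : nat -> R) (p q : R) (delta : nat -> R) (t : R) : R :=
  let ab := alpha_bar r alpha p q in
  rpow
    ( rpow (fsum r (fun l => if inJ alpha p q l
                             then rpow (delta l * rpow t (alpha l)) (p * q / (q - ab * p))
                             else 0))
           (1 - ab * p / q)
    + fmax r (fun j => if inJ alpha p q j then 0
                       else rpow (delta j * rpow t (alpha j)) p) )
    (1 / p).

Definition mat_norm (r s : nat) (q : R) (u : nat -> nat -> R) : R :=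
  rpow (fsum r (fun l => fsum s (fun m => rpow (Rabs (u l m)) q))) (1 / q).

Definition dual_norm (s : nat) (q : R) (x : nat -> R) : R :=
  if Req_EM_T q 1 then fmax s (fun m => Rabs (x m))
  else let q' := q / (q - 1) in
       rpow (fsum s (fun m => rpow (Rabs (x m)) q')) (1 / q').

(* Main.v *)
Require Import Defs.
From Stdlib Require Import Reals Lra Lia Classical.
Open Scope R_scope.

Lemma exp_le' x y : x <= y -> exp x <= exp y.
Proof. intros [H|H]; [left; apply exp_increasing; auto | subst; lra]. Qed.

Lemma ln_le' x y : 0 < x -> x <= y -> ln x <= ln y.
Proof. intros Hx [H|H]; [left; apply ln_increasing; auto | subst; lra]. Qed.

Lemma rpow_ge0 x y : 0 <= rpow x y.
Proof. unfold rpow; destruct (Rlt_dec 0 x); [left; apply exp_pos | lra]. Qed.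

Lemma rpow_pos x y : 0 < x -> rpow x y = Rpower x y.
Proof. intros; unfold rpow; destruct (Rlt_dec 0 x); [auto | lra]. Qed.

Lemma rpow_gt0 x y : 0 < x -> 0 < rpow x y.
Proof. intros; rewrite rpow_pos; auto; apply exp_pos. Qed.

Lemma rpow_nonpos x y : x <= 0 -> rpow x y = 0.
Proof. intros; unfold rpow; destruct (Rlt_dec 0 x); [lra | auto]. Qed.

Lemma rpow_le_base x x' y : 0 <= y -> x <= x' -> rpow x y <= rpow x' y.
Proof.
  intros Hy Hx. destruct (Rle_or_lt x 0).
  - rewrite rpow_nonpos; auto; apply rpow_ge0.
  - rewrite !rpow_pos by lra. apply Rle_Rpower_l; lra.
Qed.

Lemma rpow_mult_base x y z : 0 <= x -> 0 <= y -> rpow (x*y) z = rpow x z * rpow y z.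
Proof.
  intros Hx Hy. destruct (Req_dec x 0) as [->|Hx'].
  - rewrite Rmult_0_l, rpow_nonpos by lra. lra.
  - destruct (Req_dec y 0) as [->|Hy'].
    + rewrite Rmult_0_r, (rpow_nonpos 0) by lra. lra.
    + rewrite !rpow_pos by (try apply Rmult_lt_0_compat; lra).
      rewrite Rpower_mult_distr; auto; lra.
Qed.

Lemma rpow_rpow x y z : rpow (rpow x y) z = rpow x (y*z).
Proof.
  destruct (Rle_or_lt x 0).
  - rewrite !(rpow_nonpos x) by auto. apply rpow_nonpos; lra.
  - rewrite (rpow_pos x y), (rpow_pos x (y*z)) by auto.
    rewrite rpow_pos by apply exp_pos. apply Rpower_mult.
Qed.

Lemma rpow_1 x : 0 <= x -> rpow x 1 = x.
Proof.
  intros Hx; destruct (Req_dec x 0) as [->|]; [apply rpow_nonpos; lra|].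
  rewrite rpow_pos by lra; apply Rpower_1; lra.
Qed.

Lemma rpow_base1 y : rpow 1 y = 1.
Proof. rewrite rpow_pos by lra. unfold Rpower. rewrite ln_1, Rmult_0_r. apply exp_0. Qed.

Lemma rpow_0 y : rpow 0 y = 0.
Proof. apply rpow_nonpos; lra. Qed.

Lemma rpow_le_exp b y1 y2 : 0 <= b <= 1 -> y1 <= y2 -> rpow b y2 <= rpow b y1.
Proof.
  intros Hb Hy. destruct (Req_dec b 0) as [->|]; [rewrite !rpow_0; lra|].
  rewrite !rpow_pos by lra. unfold Rpower. apply exp_le'.
  assert (ln b <= 0) by (rewrite <- ln_1; apply ln_le'; lra). nra.
Qed.

Lemma rpow_inv x y : 0 < x -> rpow (/x) y = / rpow x y.
Proof.
  intros Hx. rewrite !rpow_pos by (try apply Rinv_0_lt_compat; lra).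
  unfold Rpower. rewrite ln_Rinv by auto. rewrite <- exp_Ropp. f_equal; ring.
Qed.

Lemma rpow_le1 b q : 0 < q -> 0 <= b -> rpow b q <= 1 -> b <= 1.
Proof.
  intros Hq Hb H. rewrite <- (rpow_1 b) by auto.
  replace 1 with (q * /q) at 1 by (field; lra).
  rewrite <- rpow_rpow. rewrite <- (rpow_base1 (/q)).
  apply rpow_le_base; auto. left; apply Rinv_0_lt_compat; auto.
Qed.

Lemma ln_le_sub1 x : 0 < x -> ln x <= x - 1.
Proof. intros. pose proof (exp_ineq1_le (ln x)). rewrite exp_ln in H0; lra. Qed.

Lemma amgm th a b : 0 < th < 1 -> 0 <= a -> 0 <= b ->
  rpow a th * rpow b (1 - th) <= th * a + (1 - th) * b.
Proof.
  intros Ht Ha Hb.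
  destruct (Req_dec a 0) as [->|]; [rewrite rpow_0; try rewrite Rmult_0_l; try rewrite Rmult_0_r; nra|].
  destruct (Req_dec b 0) as [->|]; [rewrite rpow_0; try rewrite Rmult_0_l; try rewrite Rmult_0_r; nra|].
  set (m := th * a + (1 - th) * b).
  assert (Hm : 0 < m) by (unfold m; nra).
  rewrite !rpow_pos by lra. unfold Rpower. rewrite <- exp_plus.
  rewrite <- (exp_ln m) by auto. apply exp_le'.
  pose proof (ln_le_sub1 (a / m)) as H1. pose proof (ln_le_sub1 (b / m)) as H2.
  assert (0 < a / m) by (apply Rdiv_lt_0_compat; lra). assert (0 < b / m) by (apply Rdiv_lt_0_compat; lra).
  specialize (H1 ltac:(auto)). specialize (H2 ltac:(auto)).
  unfold Rdiv in *. rewrite ln_mult, ln_Rinv in H1 by (try apply Rinv_0_lt_compat; lra).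
  rewrite ln_mult, ln_Rinv in H2 by (try apply Rinv_0_lt_compat; lra).
  assert (E: th * (a * / m - 1) + (1 - th) * (b * / m - 1) = 0).
  { replace (th * (a * / m - 1) + (1 - th) * (b * / m - 1)) with (m * / m - 1) by (unfold m; ring). rewrite Rinv_r; lra. }
  assert (th * (ln a + - ln m) + (1 - th) * (ln b + - ln m) <= 0).
  { rewrite <- E. apply Rplus_le_compat; apply Rmult_le_compat_l; lra. }
  replace (th * ln a + (1 - th) * ln b) with
    (th * (ln a + - ln m) + (1 - th) * (ln b + - ln m) + ln m) by ring. lra.
Qed.

Lemma fsum_ext n f g : (forall l, (l < n)%nat -> f l = g l) -> fsum n f = fsum n g.
Proof. induction n; simpl; intros; auto. rewrite IHn, H; auto; intros; apply H; lia. Qed.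

Lemma fsum_le n f g : (forall l, (l < n)%nat -> f l <= g l) -> fsum n f <= fsum n g.
Proof. induction n; simpl; intros; [lra|]. apply Rplus_le_compat; [apply IHn; intros; apply H; lia| apply H; lia]. Qed.

Lemma fsum_ge0 n f : (forall l, (l < n)%nat -> 0 <= f l) -> 0 <= fsum n f.
Proof. intros. replace 0 with (fsum n (fun _ => 0)). apply fsum_le; auto.
  induction n; simpl; auto. rewrite IHn; [lra|]; intros; apply H; lia. Qed.

Lemma fsum_scal n c f : fsum n (fun l => c * f l) = c * fsum n f.
Proof. induction n; simpl; [ring|]. rewrite IHn; ring. Qed.

Lemma fsum_plus n f g : fsum n (fun l => f l + g l) = fsum n f + fsum n g.
Proof. induction n; simpl; [ring|]. rewrite IHn; ring. Qed.

Lemma fsum_ge_term n f l : (forall l, (l < n)%nat -> 0 <= f l) -> (l < n)%nat -> f l <= fsum n f.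
Proof.
  induction n; intros; [lia|]. simpl. destruct (Nat.eq_dec l n) as [->|].
  - pose proof (fsum_ge0 n f ltac:(intros; apply H; lia)). lra.
  - pose proof (IHn ltac:(intros; apply H; lia) ltac:(lia)). pose proof (H n ltac:(lia)). lra.
Qed.

Lemma fmax_ge0 n f : 0 <= fmax n f.
Proof. induction n; simpl; [lra|]. pose proof (Rmax_l (fmax n f) (f n)). lra. Qed.

Lemma fmax_ge n f l : (l < n)%nat -> f l <= fmax n f.
Proof.
  induction n; intros; [lia|]. simpl. destruct (Nat.eq_dec l n) as [->|].
  - apply Rmax_r.
  - pose proof (IHn ltac:(lia)). pose proof (Rmax_l (fmax n f) (f n)). lra.
Qed.

Lemma fmax_le n f g : (forall l, (l < n)%nat -> f l <= g l) -> fmax n f <= fmax n g.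
Proof.
  induction n; simpl; intros; [lra|]. assert (fmax n f <= fmax n g) by (apply IHn; intros; apply H; lia).
  pose proof (H n ltac:(lia)). unfold Rmax; repeat destruct Rle_dec; lra.
Qed.

Lemma mask_le n (P : nat -> bool) h : (forall l, (l < n)%nat -> 0 <= h l) ->
  fsum n (fun l => if P l then h l else 0) + fmax n (fun l => if P l then 0 else h l) <= fsum n h.
Proof.
  induction n; simpl; intros; [lra|].
  assert (IH := IHn ltac:(intros; apply H; lia)). pose proof (H n ltac:(lia)).
  pose proof (fmax_ge0 n (fun l => if P l then 0 else h l)).
  destruct (P n); unfold Rmax; repeat destruct Rle_dec; lra.
Qed.

Lemma holder n f g th : 0 < th < 1 ->
  (forall l, (l < n)%nat -> 0 <= f l) -> (forall l, (l < n)%nat -> 0 <= g l) ->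
  fsum n (fun l => rpow (f l) th * rpow (g l) (1 - th)) <= rpow (fsum n f) th * rpow (fsum n g) (1 - th).
Proof.
  intros Ht Hf Hg. set (F := fsum n f). set (G := fsum n g).
  assert (HF : 0 <= F) by (apply fsum_ge0; auto). assert (HG : 0 <= G) by (apply fsum_ge0; auto).
  pose proof (rpow_ge0 F th). pose proof (rpow_ge0 G (1-th)).
  destruct (Req_dec F 0) as [EF|EF].
  { rewrite (fsum_ext n _ (fun _ => 0 * 0)). rewrite fsum_scal. nra.
    intros. assert (f l = 0) by (pose proof (fsum_ge_term n f l Hf H1); fold F in H2; pose proof (Hf l H1); lra).
    rewrite H2, rpow_0. ring. }
  destruct (Req_dec G 0) as [EG|EG].
  { rewrite (fsum_ext n _ (fun _ => 0 * 0)). rewrite fsum_scal. nra.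
    intros. assert (g l = 0) by (pose proof (fsum_ge_term n g l Hg H1); fold G in H2; pose proof (Hg l H1); lra).
    rewrite H2, rpow_0. ring. }
  set (K := rpow F th * rpow G (1 - th)).
  apply Rle_trans with (fsum n (fun l => K * (th * / F * f l + (1 - th) * / G * g l))).
  - apply fsum_le. intros l Hl.
    replace (f l) with (F * (/F * f l)) at 1 by (field; auto).
    replace (g l) with (G * (/G * g l)) at 1 by (field; auto).
    pose proof (Hf l Hl). pose proof (Hg l Hl).
    assert (0 <= /F) by (left; apply Rinv_0_lt_compat; lra).
    assert (0 <= /G) by (left; apply Rinv_0_lt_compat; lra).
    rewrite (rpow_mult_base F), (rpow_mult_base G) by (try apply Rmult_le_pos; lra).
    pose proof (amgm th (/F * f l) (/G * g l) Ht ltac:(apply Rmult_le_pos; lra) ltac:(apply Rmult_le_pos; lra)).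
    assert (0 <= K) by (unfold K; apply Rmult_le_pos; auto).
    replace (rpow F th * rpow (/ F * f l) th * (rpow G (1 - th) * rpow (/ G * g l) (1 - th)))
      with (K * (rpow (/ F * f l) th * rpow (/ G * g l) (1 - th))) by (unfold K; ring).
    apply Rmult_le_compat_l; auto. lra.
  - rewrite fsum_scal, fsum_plus.
    rewrite !fsum_scal. fold F G. right. field; auto.
Qed.

Lemma powsum n h k : 1 <= k -> (forall l, (l < n)%nat -> 0 <= h l) ->
  fsum n (fun l => rpow (h l) k) <= rpow (fsum n h) k.
Proof.
  intros Hk Hh. set (E := fsum n h). assert (HE : 0 <= E) by (apply fsum_ge0; auto).
  destruct (Req_dec E 0) as [EE|EE].
  { rewrite (fsum_ext n _ (fun _ => 0 * 0)). rewrite fsum_scal. rewrite Rmult_0_l; apply rpow_ge0.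
    intros. assert (h l = 0) by (pose proof (fsum_ge_term n h l Hh H); fold E in H0; pose proof (Hh l H); lra).
    rewrite H0, rpow_0. ring. }
  apply Rle_trans with (fsum n (fun l => (rpow E k * / E) * h l)).
  - apply fsum_le. intros l Hl. pose proof (Hh l Hl).
    assert (0 <= /E) by (left; apply Rinv_0_lt_compat; lra).
    replace (h l) with (E * (/E * h l)) at 1 by (field; auto).
    rewrite rpow_mult_base by (try apply Rmult_le_pos; lra).
    assert (h l <= E) by (apply fsum_ge_term; auto).
    assert (/E * h l <= 1) by (replace 1 with (/E * E) by (field; auto); apply Rmult_le_compat_l; auto).
    pose proof (rpow_le_exp (/ E * h l) 1 k ltac:(split; [apply Rmult_le_pos|]; lra) Hk).
    rewrite rpow_1 in H3 by (apply Rmult_le_pos; lra).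
    pose proof (rpow_ge0 E k).
    replace (rpow E k * / E * h l) with (rpow E k * (/ E * h l)) by ring.
    apply Rmult_le_compat_l; auto.
  - rewrite fsum_scal. fold E. right. field; auto.
Qed.

Lemma inJ_iff alpha p q l : inJ alpha p q l = true <-> alpha l * p < q.
Proof. unfold inJ; destruct Rlt_dec; split; intros; auto; try discriminate; lra. Qed.

Lemma fminP_spec n P a :
  match fminP n P a with
  | Some v => (exists l, (l < n)%nat /\ P l = true /\ v = a l) /\
              (forall l, (l < n)%nat -> P l = true -> v <= a l)
  | None => forall l, (l < n)%nat -> P l = false
  end.
Proof.
  induction n; simpl.
  - intros; lia.
  - destruct (fminP n P a) as [v|] eqn:E; destruct (P n) eqn:Pn.
    + destruct IHn as [[l [Hl [Pl ->]]] H2]. split.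
      * unfold Rmin; destruct Rle_dec; [exists l | exists n]; repeat split; auto; lia.
      * intros l' Hl' Pl'. destruct (Nat.eq_dec l' n) as [->|].
        -- apply Rmin_r.
        -- pose proof (H2 l' ltac:(lia) Pl'). pose proof (Rmin_l (a l) (a n)). lra.
    + destruct IHn as [[l [Hl [Pl ->]]] H2]. split.
      * exists l; repeat split; auto; lia.
      * intros l' Hl' Pl'. destruct (Nat.eq_dec l' n) as [->|]; [congruence|]. apply H2; auto; lia.
    + split.
      * exists n; repeat split; auto.
      * intros l' Hl' Pl'. destruct (Nat.eq_dec l' n) as [->|]; [lra|].
        rewrite IHn in Pl'; [discriminate|lia].
    + intros l Hl. destruct (Nat.eq_dec l n) as [->|]; auto. apply IHn; lia.
Qed.

Lemma ab_facts r alpha p q : (forall l, (l < r)%nat -> 0 < alpha l) -> 0 < p -> 0 < q ->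
  0 <= alpha_bar r alpha p q /\ alpha_bar r alpha p q * p < q /\
  (forall l, (l < r)%nat -> inJ alpha p q l = true -> alpha_bar r alpha p q <= alpha l) /\
  ((exists l, (l < r)%nat /\ inJ alpha p q l = true) -> 0 < alpha_bar r alpha p q).
Proof.
  intros Ha Hp Hq. unfold alpha_bar. pose proof (fminP_spec r (inJ alpha p q) alpha) as S.
  destruct (fminP r (inJ alpha p q) alpha) as [v|].
  - destruct S as [[l [Hl [Pl ->]]] H2]. apply inJ_iff in Pl. pose proof (Ha l Hl).
    repeat split; auto; lra.
  - repeat split; try lra.
    + intros l Hl Pl. rewrite S in Pl; [discriminate|auto].
    + intros [l [Hl Pl]]. rewrite S in Pl; [discriminate|auto].
Qed.

Lemma part2 (r : nat) (alpha : nat -> R) (p pu : R) (delta : nat -> R) :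
  (forall l, (l < r)%nat -> 0 < alpha l) ->
  1 <= p -> 1 <= pu ->
  (forall l, (l < r)%nat -> 0 < delta l) ->
  (forall (delta' : nat -> R) (t t' : R),
     (forall l, (l < r)%nat -> delta l <= delta' l) ->
     0 < t -> t <= t' ->
     Psi r alpha p pu delta t <= Psi r alpha p pu delta' t'
     /\ Psi r alpha p pu delta' t' <= fsum r (fun l => delta' l * rpow t' (alpha l))).
Proof.
  intros Ha Hp Hq Hd delta' t t' Hdd Ht Htt.
  destruct (ab_facts r alpha p pu Ha ltac:(lra) ltac:(lra)) as [Hab0 [Hab1 [Hab2 Hab3]]].
  unfold Psi. set (ab := alpha_bar r alpha p pu) in *.
  assert (He : 0 < p * pu / (pu - ab * p)) by (apply Rdiv_lt_0_compat; nra).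
  assert (He2 : 0 <= 1 - ab * p / pu).
  { assert (ab * p / pu < 1) by (apply (Rmult_lt_reg_r pu); [lra|]; unfold Rdiv; rewrite Rmult_assoc, Rinv_l; lra). lra. }
  assert (Hpinv : 0 <= 1 / p) by (left; apply Rdiv_lt_0_compat; lra).
  assert (dle : forall l, (l < r)%nat -> delta l * rpow t (alpha l) <= delta' l * rpow t' (alpha l)).
  { intros l Hl. pose proof (Hd l Hl). pose proof (Hdd l Hl). pose proof (Ha l Hl).
    pose proof (rpow_le_base t t' (alpha l) ltac:(lra) Htt).
    apply Rmult_le_compat; try lra; apply rpow_ge0. }
  assert (dpos : forall l, (l < r)%nat -> 0 <= delta' l * rpow t' (alpha l)).
  { intros l Hl. pose proof (Hd l Hl). pose proof (Hdd l Hl). apply Rmult_le_pos; [lra|apply rpow_ge0]. }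
  split.
  - apply rpow_le_base; auto. apply Rplus_le_compat.
    + apply rpow_le_base; auto. apply fsum_le; intros l Hl.
      destruct (inJ alpha p pu l); [|lra]. apply rpow_le_base; [lra|auto].
    + apply fmax_le; intros l Hl. destruct (inJ alpha p pu l); [lra|].
      apply rpow_le_base; [lra|auto].
  - set (d := fun l => delta' l * rpow t' (alpha l)).
    set (k := pu / (pu - ab * p)).
    assert (Hk : 1 <= k).
    { unfold k. apply (Rmult_le_reg_r (pu - ab * p)); [lra|].
      unfold Rdiv; rewrite Rmult_assoc, Rinv_l by lra. nra. }
    set (H := fun l => if inJ alpha p pu l then rpow (d l) p else 0).
    assert (HH : forall l, (l < r)%nat -> 0 <= H l) by (intros; unfold H; destruct inJ; [apply rpow_ge0|lra]).
    assert (A1 : fsum r (fun l => if inJ alpha p pu l then rpow (delta' l * rpow t' (alpha l)) (p * pu / (pu - ab * p)) else 0)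
                 = fsum r (fun l => rpow (H l) k)).
    { apply fsum_ext; intros l Hl. unfold H. destruct inJ.
      - rewrite rpow_rpow. f_equal. unfold k. field. lra.
      - rewrite rpow_0; auto. }
    rewrite A1.
    assert (A2 : rpow (fsum r (fun l => rpow (H l) k)) (1 - ab * p / pu) <= fsum r H).
    { apply Rle_trans with (rpow (rpow (fsum r H) k) (1 - ab * p / pu)).
      - apply rpow_le_base; auto. apply powsum; auto.
      - rewrite rpow_rpow. replace (k * (1 - ab * p / pu)) with 1 by (unfold k; field; lra).
        rewrite rpow_1; [lra|]. apply fsum_ge0; auto. }
    assert (A3 : fsum r H + fmax r (fun j => if inJ alpha p pu j then 0 else rpow (d j) p)
                 <= rpow (fsum r d) p).
    { apply Rle_trans with (fsum r (fun l => rpow (d l) p)).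
      - unfold H. apply mask_le. intros; apply rpow_ge0.
      - apply powsum; auto. }
    apply Rle_trans with (rpow (rpow (fsum r d) p) (1 / p)).
    + apply rpow_le_base; auto. unfold d in *. lra.
    + rewrite rpow_rpow. replace (p * (1 / p)) with 1 by (field; lra). rewrite rpow_1; [lra|].
      apply fsum_ge0; auto.
Qed.

Lemma row_holder s q (v x : nat -> R) : 1 <= q -> (forall m, (m < s)%nat -> 0 < v m) ->
  (forall m, (m < s)%nat -> 0 <= x m) ->
  fsum s (fun m => v m * x m) <= rpow (fsum s (fun m => rpow (Rabs (v m)) q)) (1/q) * dual_norm s q x.
Proof.
  intros Hq Hv Hx. unfold dual_norm. destruct (Req_EM_T q 1) as [->|Hq1].
  - replace (1/1) with 1 by field.
    rewrite (fsum_ext s (fun m => rpow (Rabs (v m)) 1) v).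
    2:{ intros m Hm. pose proof (Hv m Hm). rewrite Rabs_right by lra. apply rpow_1; lra. }
    rewrite rpow_1 by (apply fsum_ge0; intros; left; auto).
    rewrite Rmult_comm, <- fsum_scal. apply fsum_le. intros m Hm.
    rewrite (Rmult_comm (fmax _ _)). apply Rmult_le_compat_l; [left; auto|].
    pose proof (fmax_ge s (fun m => Rabs (x m)) m Hm). simpl in H.
    rewrite Rabs_right in H; auto. pose proof (Hx m Hm); lra.
  - assert (Hq' : 1 < q) by lra. set (q' := q / (q - 1)).
    set (f := fun m => rpow (Rabs (v m)) q). set (g := fun m => rpow (Rabs (x m)) q').
    assert (E : 1 / q' = 1 - 1 / q) by (unfold q'; field; lra). rewrite E.
    apply Rle_trans with (fsum s (fun m => rpow (f m) (1/q) * rpow (g m) (1 - 1/q))).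
    + right. apply fsum_ext. intros m Hm. unfold f, g. rewrite !rpow_rpow.
      replace (q * (1/q)) with 1 by (field; lra).
      replace (q' * (1 - 1/q)) with 1 by (unfold q'; field; lra).
      pose proof (Hv m Hm). pose proof (Hx m Hm).
      rewrite !Rabs_right by lra. rewrite !rpow_1 by lra. auto.
    + apply holder.
      * split; [apply Rdiv_lt_0_compat|]; try lra. apply (Rmult_lt_reg_r q); [lra|].
        unfold Rdiv; rewrite Rmult_assoc, Rinv_l; lra.
      * intros; apply rpow_ge0.
      * intros; apply rpow_ge0.
Qed.

Lemma part1 (r s : nat) (alpha : nat -> R) (p pu rhou : R)
  (delta : nat -> R) :
  (forall l, (l < r)%nat -> 0 < alpha l) ->
  1 <= p -> 1 <= pu -> 0 < rhou ->
  (forall l, (l < r)%nat -> 0 < delta l) ->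
  (forall (x : nat -> R) (u : nat -> nat -> R),
     (forall m, (m < s)%nat -> 0 <= x m) ->
     (forall l m, (l < r)%nat -> (m < s)%nat -> 0 < u l m) ->
     mat_norm r s pu u <= rhou ->
     rpow (fsum r (fun l => rpow (delta l) p *
                            rpow (fsum s (fun m => u l m * x m)) (p * alpha l)))
          (1 / p)
     <= Psi r alpha p pu delta (rhou * dual_norm s pu x)).
Proof.
  intros Ha Hp Hq Hrho Hd x u Hx Hu Hnorm.
  destruct (ab_facts r alpha p pu Ha ltac:(lra) ltac:(lra)) as [Hab0 [Hab1 [Hab2 Hab3]]].
  set (N := dual_norm s pu x).
  assert (HN : 0 <= N) by (unfold N, dual_norm; destruct Req_EM_T; [apply fmax_ge0|apply rpow_ge0]).
  set (T := rhou * N). assert (HT : 0 <= T) by (unfold T; nra).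
  set (R0 := fun l => fsum s (fun m => rpow (Rabs (u l m)) pu)).
  assert (HR0 : forall l, 0 <= R0 l) by (intros; apply fsum_ge0; intros; apply rpow_ge0).
  set (a := fun l => rpow (R0 l) (1/pu)).
  assert (Hy : forall l, (l < r)%nat -> fsum s (fun m => u l m * x m) <= a l * N).
  { intros l Hl. apply row_holder; auto. }
  assert (HS : fsum r R0 <= rpow rhou pu).
  { unfold mat_norm in Hnorm. apply (rpow_le_base _ _ pu) in Hnorm; [|lra].
    rewrite rpow_rpow in Hnorm. replace (1/pu*pu) with 1 in Hnorm by (field; lra).
    rewrite rpow_1 in Hnorm; [exact Hnorm|apply fsum_ge0; intros; apply HR0]. }
  assert (Hrq : 0 < rpow rhou pu) by (apply rpow_gt0; auto).
  set (b := fun l => a l * / rhou).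
  assert (Hb0 : forall l, 0 <= b l).
  { intros; unfold b; apply Rmult_le_pos; [apply rpow_ge0|left; apply Rinv_0_lt_compat; auto]. }
  assert (Ebq : forall l, rpow (b l) pu = / rpow rhou pu * R0 l).
  { intros; unfold b, a. rewrite rpow_mult_base by (try apply rpow_ge0; left; apply Rinv_0_lt_compat; auto).
    rewrite rpow_inv, rpow_rpow by auto. replace (1/pu*pu) with 1 by (field; lra).
    rewrite rpow_1 by auto. ring. }
  assert (Hbs : fsum r (fun l => rpow (b l) pu) <= 1).
  { rewrite (fsum_ext r _ (fun l => / rpow rhou pu * R0 l)) by (intros; apply Ebq).
    rewrite fsum_scal. apply (Rmult_le_reg_l (rpow rhou pu)); auto.
    rewrite <- Rmult_assoc, Rinv_r; lra. }
  assert (Hb1 : forall l, (l < r)%nat -> b l <= 1).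
  { intros l Hl. apply (rpow_le1 _ pu); auto; [lra|].
    eapply Rle_trans; [|exact Hbs]. apply (fsum_ge_term r (fun l => rpow (b l) pu)); auto.
    intros; apply rpow_ge0. }
  assert (HyT : forall l, (l < r)%nat -> fsum s (fun m => u l m * x m) <= b l * T).
  { intros l Hl. replace (b l * T) with (a l * N) by (unfold b, T; field; lra). auto. }
  unfold Psi. set (ab := alpha_bar r alpha p pu) in *.
  set (c := fun l => rpow (delta l * rpow T (alpha l)) p).
  assert (Hc : forall l, 0 <= c l) by (intros; apply rpow_ge0).
  apply rpow_le_base; [left; apply Rdiv_lt_0_compat; lra|].
  apply Rle_trans with (fsum r (fun l => (if inJ alpha p pu l then c l * rpow (b l) (ab * p) else 0)
                                  + (if inJ alpha p pu l then 0 else c l * rpow (b l) pu))).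
  { apply fsum_le. intros l Hl. pose proof (Ha l Hl). pose proof (Hd l Hl).
    assert (Ec : c l = rpow (delta l) p * rpow T (p * alpha l)).
    { unfold c. rewrite rpow_mult_base, rpow_rpow, (Rmult_comm (alpha l) p); auto; [lra|apply rpow_ge0]. }
    apply Rle_trans with (c l * rpow (b l) (p * alpha l)).
    - rewrite Ec. rewrite Rmult_assoc. apply Rmult_le_compat_l; [apply rpow_ge0|].
      rewrite (Rmult_comm (rpow T _)), <- rpow_mult_base by auto.
      apply rpow_le_base; [nra|]. auto.
    - pose proof (Hb0 l). pose proof (Hb1 l Hl). destruct (inJ alpha p pu l) eqn:EJ.
      + rewrite Rplus_0_r. apply Rmult_le_compat_l; auto. apply rpow_le_exp; [lra|].
        pose proof (Hab2 l Hl EJ). nra.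
      + rewrite Rplus_0_l. apply Rmult_le_compat_l; auto. apply rpow_le_exp; [lra|].
        assert (~ (alpha l * p < pu)) by (intro HH; apply inJ_iff in HH; congruence). lra. }
  rewrite fsum_plus. apply Rplus_le_compat.
  - destruct (classic (exists l, (l < r)%nat /\ inJ alpha p pu l = true)) as [HJ|HJ].
    + pose proof (Hab3 HJ) as Habp.
      set (e := 1 - ab * p / pu).
      assert (He : 0 < e < 1).
      { unfold e. assert (0 < ab * p / pu) by (apply Rdiv_lt_0_compat; nra).
        assert (ab * p / pu < 1) by (apply (Rmult_lt_reg_r pu); [lra|]; unfold Rdiv; rewrite Rmult_assoc, Rinv_l; lra). lra. }
      set (F := fun l => if inJ alpha p pu l then rpow (delta l * rpow T (alpha l)) (p * pu / (pu - ab * p)) else 0).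
      set (G := fun l => if inJ alpha p pu l then rpow (b l) pu else 0).
      apply Rle_trans with (fsum r (fun l => rpow (F l) e * rpow (G l) (1 - e))).
      { right. apply fsum_ext. intros l Hl. unfold F, G. destruct inJ.
        - rewrite !rpow_rpow. unfold c. f_equal; f_equal.
          + unfold e. field. lra.
          + unfold e. field. lra.
        - rewrite !rpow_0; ring. }
      eapply Rle_trans; [apply holder; auto; intros; unfold F, G; destruct inJ; try apply rpow_ge0; lra|].
      fold e. rewrite <- (Rmult_1_r (rpow (fsum r _) e)) at 2.
      apply Rmult_le_compat_l; [apply rpow_ge0|].
      apply Rle_trans with (rpow 1 (1 - e)); [|rewrite rpow_base1; lra].
      apply rpow_le_base; [lra|].
      eapply Rle_trans; [|exact Hbs]. apply fsum_le; intros; unfold G; destruct inJ; [lra|apply rpow_ge0].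
    + rewrite (fsum_ext r _ (fun _ => 0 * 0)).
      * rewrite fsum_scal, Rmult_0_l. apply rpow_ge0.
      * intros l Hl. destruct (inJ alpha p pu l) eqn:EJ; [|ring]. exfalso; apply HJ; eauto.
  - set (M := fmax r (fun j => if inJ alpha p pu j then 0 else rpow (delta j * rpow T (alpha j)) p)).
    assert (HM : 0 <= M) by apply fmax_ge0.
    apply Rle_trans with (fsum r (fun l => M * (if inJ alpha p pu l then 0 else rpow (b l) pu))).
    + apply fsum_le. intros l Hl. pose proof (fmax_ge r (fun j => if inJ alpha p pu j then 0 else rpow (delta j * rpow T (alpha j)) p) l Hl).
      fold M in H. cbv beta in H. destruct (inJ alpha p pu l); [lra|]. apply Rmult_le_compat_r; [apply rpow_ge0|exact H].
    + rewrite fsum_scal. rewrite <- (Rmult_1_r M) at 2. apply Rmult_le_compat_l; auto.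
      eapply Rle_trans; [|exact Hbs]. apply fsum_le; intros; destruct inJ; [apply rpow_ge0|lra].
Qed.

Theorem mainTheorem9 (r s : nat) (alpha : nat -> R) (p pu rhou : R)
  (delta : nat -> R) :
  (forall l, (l < r)%nat -> 0 < alpha l) ->
  1 <= p -> 1 <= pu -> 0 < rhou ->
  (forall l, (l < r)%nat -> 0 < delta l) ->
  (forall (x : nat -> R) (u : nat -> nat -> R),
     (forall m, (m < s)%nat -> 0 <= x m) ->
     (forall l m, (l < r)%nat -> (m < s)%nat -> 0 < u l m) ->
     mat_norm r s pu u <= rhou ->
     rpow (fsum r (fun l => rpow (delta l) p *
                            rpow (fsum s (fun m => u l m * x m)) (p * alpha l)))
          (1 / p)
     <= Psi r alpha p pu delta (rhou * dual_norm s pu x))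
  /\
  (forall (delta' : nat -> R) (t t' : R),
     (forall l, (l < r)%nat -> delta l <= delta' l) ->
     0 < t -> t <= t' ->
     Psi r alpha p pu delta t <= Psi r alpha p pu delta' t'
     /\ Psi r alpha p pu delta' t' <= fsum r (fun l => delta' l * rpow t' (alpha l))).
Proof.
  intros Ha Hp Hq Hrho Hd. split.
  - apply part1; auto.
  - apply part2; auto.
Qed.
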